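(* For every integer $n \geq -1$, $q_n(x) = 2^{n+1} F_{n+1}(x, 1/2)$. Equivalently, as formal power series in $t$, \[ \sum_{n=0}^\infty q_{n-1}(x) \frac{t^n}{n!} = \mathscr{F}(x,1/2;2t) = \left(\frac{1-x}{e^{2t(x-1)}-x}\right)^{1/2}. \]
   Context: Define polynomial sequences $(p_k(x))_{k\ge -1}$ and $(q_k(x))_{k\ge -1}$ by $p_{-1}(x)=0$, $q_{-1}(x)=1$ and, for $k\ge -1$, $p_{k+1}(x) = 2(kx+1)p_k(x) + 2x(1-x)p_k'(x) + q_k(x)$, $q_{k+1}(x) = (2(k+1)x+1)q_k(x) + 2x(1-x)q_k'(x)$. For a permutation $\pi=\pi_1\cdots\pi_n$ of $[n]=\{1,\dots,n\}$, let $\mathrm{exc}(\pi)=|\{i\in[n]:\pi_i>i\}|$ and $\mathrm{cyc}(\pi)$ the number of cycles in its disjoint cycle decomposition. The bivariate Eulerian polynomials are $F_0(x,y)=1$ and $F_n(x,y)=\sum_{\pi\in\mathfrak S_n} x^{\mathrm{exc}(\pi)}y^{\mathrm{cyc}(\pi)}$ for $n>0$, where $\mathfrak S_n$ is the symmetric group on $[n]$; their exponential generating function is $\mathscr{F}(x,y;t)=\sum_{n\ge0}F_n(x,y)t^n/n! = \left(\frac{1-x}{e^{t(x-1)}-x}\right)^y$. *)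

(* Defs.v *)
From mathcomp Require Import all_boot all_order all_algebra all_fingroup.
Set Implicit Arguments. Unset Strict Implicit. Unset Printing Implicit Defensive.
Import GRing.Theory.
Local Open Scope ring_scope.

(* Index shift: qseq m = q_{m-1}(x), so qseq 0 = q_{-1} = 1 and, for k = m-1,
   q_{k+1} = (2(k+1)x + 1) q_k + 2x(1-x) q_k'. Polynomials over rat. *)
Fixpoint qseq (m : nat) : {poly rat} :=
  match m with
  | 0 => 1
  | m'.+1 => (2 * m'%:R *: 'X + 1) * qseq m'
             + (2%:P * 'X * (1 - 'X)) * (qseq m')^`()
  end.

(* companion sequence pseq m = p_{m-1}(x); p_{-1} = 0 (not used by the theorem) *)
Fixpoint pseq (m : nat) : {poly rat} :=
  match m with
  | 0 => 0
  | m'.+1 => (2%:P * ((m'%:R - 1) *: 'X + 1)) * pseq m'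
             + (2%:P * 'X * (1 - 'X)) * (pseq m')^`() + qseq m'
  end.

(* excedances of a permutation of 'I_n (0-based, same as 1-based count) *)
Definition exc n (s : 'S_n) : nat := #|[set i : 'I_n | (i < s i)%N]|.
Definition cyc n (s : 'S_n) : nat := #|porbits s|.

Definition Fxy (n : nat) (y : rat) : {poly rat} :=
  if n == 0%N then 1
  else \sum_(s : 'S_n) y ^+ cyc s *: 'X^(exc s).

(* Main.v *)
Require Import Defs.
From mathcomp Require Import all_boot all_order all_algebra all_fingroup zify ring.
Set Implicit Arguments. Unset Strict Implicit. Unset Printing Implicit Defensive.
Import GRing.Theory.
Module SA.
Local Open Scope group_scope.
Section Cyc.
Variable n : nat.
Variable s : 'S_n.
Local Notation L := (@ord_max n).
Local Notation u := (lift_perm L L s).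

Lemma liftX i k : (u ^+ i) (lift L k) = lift L ((s ^+ i) k).
Proof.
elim: i => [|i IH]; first by rewrite !expg0 !perm1.
by rewrite !expgSr !permM IH lift_perm_lift.
Qed.

Lemma uLX i : (u ^+ i) L = L.
Proof.
elim: i => [|i IH]; first by rewrite expg0 perm1.
by rewrite expgSr permM IH lift_perm_id.
Qed.

Lemma porbit_uL : porbit u L = [set L].
Proof.
apply/setP=> x; rewrite inE; apply/porbitP/eqP => [[i ->]|->]; first exact: uLX.
by exists 0; rewrite expg0 perm1.
Qed.

Lemma porbit_ulift k : porbit u (lift L k) = lift L @: porbit s k.
Proof.
apply/setP=> x; apply/porbitP/imsetP => [[i ->]|[z /porbitP[i ->] ->]].
  by exists ((s ^+ i) k); [apply/porbitP; exists i | rewrite liftX].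
by exists i; rewrite liftX.
Qed.

Lemma cyc_lift : cyc u = (cyc s).+1.
Proof.
rewrite /cyc.
have -> : porbits u = [set L] |: ((fun X : {set 'I_n} => lift L @: X) @: porbits s).
  apply/setP=> X; rewrite !inE; apply/imsetP/idP.
    case=> x _ ->; case: (unliftP L x) => [k|] ->.
      by rewrite porbit_ulift imset_f ?orbT // imset_f.
    by rewrite porbit_uL eqxx.
  case/orP=> [/eqP ->|/imsetP[Y /imsetP[k _ ->] ->]].
    by exists L; rewrite ?porbit_uL.
  by exists (lift L k); rewrite ?porbit_ulift.
rewrite cardsU1 card_imset; last exact/imset_inj/lift_inj.
suff -> : ([set L] \notin (fun X : {set 'I_n} => lift L @: X) @: porbits s) by [].
apply/negP.
case/imsetP=> Y /imsetP[k _ ->] /setP /(_ L).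
rewrite inE eqxx => /esym /imsetP[z _] /eqP; by rewrite (negbTE (neq_lift _ _)).
Qed.
End Cyc.
End SA.
Import SA.
Module SB.
Local Open Scope group_scope.
Lemma porbit_fix (T : finType) (u : {perm T}) x : u x = x -> porbit u x = [set x].
Proof.
move=> ux; have uX i : (u ^+ i) x = x.
  by elim: i => [|i IH]; rewrite ?expg0 ?perm1 // expgSr permM IH.
apply/setP=> z; rewrite inE; apply/porbitP/eqP => [[i ->]|->]; first exact: uX.
by exists 0; rewrite expg0 perm1.
Qed.

Lemma cyc_mul_tperm n (u : 'S_n) (L j : 'I_n) :
  u L = L -> j != L -> (cyc (u * tperm L j)).+1 = cyc u.
Proof.
move=> uL jL; rewrite /cyc -porbitsV invMg tpermV.
have := porbits_mul_tperm (u^-1) L j.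
rewrite porbitV porbit_sym porbit_fix // inE.
rewrite jL eq_sym jL /=.
by rewrite porbitsV addn2 addn1 => -[].
Qed.

Lemma excE n (s : 'S_n) : exc s = \sum_(i < n) (i < s i)%N.
Proof.
rewrite /exc -sum1_card big_mkcond /=; apply: eq_bigr => i _.
by rewrite inE; case: (_ < _)%N.
Qed.

Section Exc.
Variable n : nat.
Variable s : 'S_n.
Local Notation L := (@ord_max n).
Local Notation u := (lift_perm L L s).

Lemma exc_lift : exc u = exc s.
Proof.
rewrite !excE big_ord_recr /= lift_perm_id ltnn addn0.
apply: eq_bigr => i _.
have -> : widen_ord (leqnSn n) i = lift L i.
  by apply: ord_inj; rewrite lift_max.
by rewrite (lift_perm_lift L L s i) (lift_max (s i)).
Qed.

Lemma exc_tp i : (exc (u * tperm L (lift L (s i))) + (i < s i))%N = (exc s).+1.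
Proof.
rewrite !excE big_ord_recr /= permM lift_perm_id tpermL lift_max ltnNge.
rewrite (ltnW (ltn_ord (s i))) /= addn0.
rewrite (bigD1 i) //= (bigD1 i (P := predT)) //=.
have wl k : widen_ord (leqnSn n) k = lift L k by apply: ord_inj; rewrite lift_max.
rewrite wl permM (lift_perm_lift L L s i) tpermR /= ltn_ord.
have E : \sum_(k < n | k != i) (k < (u * tperm L (lift L (s i)))%g (widen_ord (leqnSn n) k))%N
   = \sum_(k < n | k != i) (k < s k)%N.
  apply: eq_bigr => k /negbTE ki.
  rewrite wl permM (lift_perm_lift L L s k) tpermD.
  - by rewrite (lift_max (s k)).
  - exact: neq_lift.
  - by rewrite (inj_eq (@lift_inj _ _)) (inj_eq (@perm_inj _ _)) eq_sym ki.
by rewrite E add1n addSn addnC.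
Qed.
End Exc.
End SB.
Import SB.
Module SC.
Local Open Scope ring_scope.
Definition W (y : rat) n (s : 'S_n) : {poly rat} := y ^+ cyc s *: 'X^(exc s).

Lemma inner y n (s : 'S_n) :
  \sum_(j : 'I_n.+1) W y (lift_perm ord_max ord_max s * tperm ord_max j)%g
  = y ^+ cyc s *: (y *: 'X^(exc s) + ('X^(exc s) *+ exc s)
                   + ('X^((exc s).+1) *+ (n - exc s)%N)).
Proof.
rewrite big_ord_recr /= tperm1 mulg1 /W cyc_lift exc_lift.
have wl k : widen_ord (leqnSn n) k = lift ord_max k by apply: ord_inj; rewrite lift_max.
under eq_bigr => k _ do rewrite wl.
rewrite (reindex_inj (@perm_inj _ s)) /=.
have T i : y ^+ cyc (lift_perm ord_max ord_max s * tperm ord_max (lift ord_max (s i)))%g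
     *: 'X^(exc (lift_perm ord_max ord_max s * tperm ord_max (lift ord_max (s i)))%g)
   = y ^+ cyc s *: (('X^(exc s) *+ (i < s i)%N) + ('X^((exc s).+1) *+ (~~ (i < s i))%N)).
  have := cyc_mul_tperm (lift_perm_id ord_max ord_max s) (negbT (lift_eqF ord_max (s i))).
  rewrite cyc_lift => -[->].
  have := exc_tp s i.
  by case: (i < s i)%N => /= h; rewrite ?mulr0n ?mulr1n ?addr0 ?add0r; congr (_ *: 'X^_); lia.
under eq_bigr => i _ do rewrite T.
rewrite -scaler_sumr big_split /= !sumrMnr -excE.
have -> : (\sum_(i < n) (~~ (i < s i))%N)%N = (n - exc s)%N.
  suff h : (exc s + \sum_(i < n) (~~ (i < s i))%N)%N = n by lia.
  rewrite excE -big_split /=.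
  rewrite (eq_bigr (fun _ => 1%N)); last by move=> i _; case: (_ < _)%N.
  by rewrite sum1_card card_ord.
rewrite [y ^+ (cyc s).+1]exprSr -scalerA -scalerDr. congr (_ *: _); rewrite [LHS]addrC; exact: addrA.
Qed.

Lemma fixers n (G : 'S_n.+1 -> {poly rat}) :
  \sum_(v : 'S_n.+1 | v ord_max == ord_max) G v
  = \sum_(s : 'S_n) G (lift_perm ord_max ord_max s).
Proof.
set i0 := @ord_max n.
rewrite (reindex (lift_perm i0 i0)); last first.
  pose ulsf i (s : 'S_n.+1) k := odflt k (unlift (s i) (s (lift i k))).
  have ulsfK i (s : 'S_n.+1) k: lift (s i) (ulsf i s k) = s (lift i k).
    rewrite /ulsf; have:= neq_lift i k.
    by rewrite -(can_eq (permK s)) => /unlift_some[] ? ? ->.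
  have inj_ulsf: injective (ulsf i0 _).
    move=> s; apply: can_inj (ulsf (s i0) s^-1%g) _ => k'.
    by rewrite {1}/ulsf ulsfK !permK liftK.
  exists (fun s => perm (inj_ulsf s)) => [s _ | s].
    by apply/permP=> k'; rewrite permE /ulsf lift_perm_lift lift_perm_id liftK.
  move/(s _ =P _) => si0; apply/permP=> k.
  case: (unliftP i0 k) => [k'|] ->; rewrite ?lift_perm_id //.
  by rewrite lift_perm_lift permE; have := ulsfK i0 s k'; rewrite si0.
by apply: eq_bigl => s; rewrite lift_perm_id eqxx.
Qed.

Lemma outer y n : \sum_(s : 'S_n.+1) W y s
  = \sum_(s : 'S_n) \sum_(j : 'I_n.+1)
        W y (lift_perm ord_max ord_max s * tperm ord_max j)%g.
Proof.
rewrite (partition_big (fun s : 'S_n.+1 => s ord_max) predT) //=.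
rewrite [RHS]exchange_big /=; apply: eq_bigr => j _.
rewrite (reindex_inj (@mulIg _ (tperm ord_max j))) /=.
rewrite -(fixers (fun v => W y (v * tperm ord_max j)%g)).
apply: eq_bigl => v; rewrite permM.
by rewrite -[v ord_max == ord_max](inj_eq (@perm_inj _ (tperm ord_max j))) tpermL.
Qed.
End SC.
Import SC.
Module SD.
Local Open Scope ring_scope.
Lemma Fxy_sum n y : Fxy n y = \sum_(s : 'S_n) W y s.
Proof.
rewrite /Fxy; case: n => [|n] //=.
rewrite (eq_bigr (fun _ => W y (1 : 'S_0)%g)); last by move=> s _; rewrite (permS0 s).
rewrite sumr_const card_Sn /= /W.
have c0 : cyc (1 : 'S_0)%g = 0%N.
  apply/eqP; rewrite -leqn0; apply: leq_trans (leq_imset_card _ _) _; by rewrite card_ord.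
have e0 : exc (1 : 'S_0)%g = 0%N.
  apply/eqP; rewrite -leqn0; apply: leq_trans (max_card _) _; by rewrite card_ord.
by rewrite c0 e0 expr0 scale1r.
Qed.

Lemma excle n (s : 'S_n) : (exc s <= n)%N.
Proof. by rewrite /exc; apply: leq_trans (max_card _) _; rewrite card_ord. Qed.

Lemma term m (k c : rat) e : (e <= m)%N ->
  (2 * m%:R *: 'X + 1) * (k *: (c *: 'X^e))
  + (2%:P * 'X * (1 - 'X)) * (k *: (c *: ('X^(e.-1) *+ e)))
  = (k * 2) *: (c *: ((1/2 : rat) *: 'X^e + 'X^e *+ e + 'X^(e.+1) *+ (m - e)%N)).
Proof.
move=> le.
rewrite -(mulr_natr ('X^(e.-1)) e) -(mulr_natr 'X^e e) -(mulr_natr 'X^(e.+1) (m-e)).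
rewrite (natrB _ le) !scalerDr !scalerA.
have -> : k * 2 * c * (1/2) = k * c :> rat by field.
rewrite -!mul_polyC !polyCM !polyC_natr.
case: e le => [|e] le.
  rewrite !mulr0 !expr0 expr1.
  move: (k%:P) (c%:P) ('X : {poly rat}) (m%:R : {poly rat}) => a b x M.
  ring.
rewrite /= !exprS -addn1 natrD.
move: (k%:P) (c%:P) ('X : {poly rat}) ('X^e : {poly rat}) (m%:R : {poly rat}) (e%:R : {poly rat}) => a b x P M E.
ring.
Qed.

End SD.
Import SD.
Local Open Scope ring_scope.

Theorem theorem2p4 (m : nat) :
  qseq m = (2 ^+ m : rat) *: Fxy m (1 / 2).
Proof.
elim: m => [|m IH]; first by rewrite /Fxy /= scale1r.
rewrite /= IH !Fxy_sum outer.
under [X in _ = _ *: X]eq_bigr => s _ do rewrite inner.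
rewrite derivZ (raddf_sum (GRing.Additive.clone _ _ (@deriv rat) _)) /= !scaler_sumr !mulr_sumr -big_split /=.
apply: eq_bigr => s _.
rewrite /W derivZ derivXn exprSr.
exact: term (excle s).
Qed.
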